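(* In $\widehat{\mathcal{C}}$ there is a morphism $\forall:\mathbb{F}^{\mathbb{I}}\to\mathbb{F}$ which is internally right adjoint to the constant map $\mathbb{F}\to\mathbb{F}^{\mathbb{I}}$, $\phi\mapsto\lambda\_.\phi$, of internal posets; i.e. in the internal logic, for all $\phi:\mathbb{F}$ and $f:\mathbb{I}\to\mathbb{F}$, $\big(\forall (i:\mathbb{I}).\ \phi\Rightarrow f(i)\big)\iff\big(\phi\Rightarrow\forall(f)\big)$.
   Context: $\mathcal{C}$ is the category of cubes: objects finite sets of names, morphisms $I\to J$ functions $J\to\mathrm{dM}(I)$ with $\mathrm{dM}(I)$ the free De Morgan algebra on $I$, composition by substitution. $\mathbb{I}$ is the cubical set $I\mapsto\mathrm{dM}(I)$, an internal De Morgan algebra. $\mathbb{F}$ is the image (as a subobject of the subobject classifier $\Omega$) of the map $\mathbb{I}\to\Omega$, $r\mapsto(r=1)$, with lattice structure inherited from $\Omega$; concretely $\mathbb{F}(I)$ is the distributive lattice generated by symbols $(i=0),(i=1)$ for $i\in I$ subject to $(i=0)\wedge(i=1)=0$. *)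

(* Defs.v *)
From mathcomp Require Import all_boot.
Set Implicit Arguments. Unset Strict Implicit. Unset Printing Implicit Defensive.

Definition upclosedb (T : finType) (le : rel T) (S : {set T}) : bool :=
  [forall x, forall y, ((x \in S) && le x y) ==> (y \in S)].

Lemma upclosedP (T : finType) (le : rel T) (S : {set T}) x y :
  upclosedb le S -> x \in S -> le x y -> y \in S.
Proof. by move=> /forallP/(_ x)/forallP/(_ y)/implyP H Hx Hl; apply: H; rewrite Hx. Qed.

(* Free De Morgan algebra dM(I) on the finite set of names I = 'I_m.   *)
(* Literals: (i, true) stands for i, (i, false) stands for ~ i.        *)
(* A clause is a finite set of literals (read as their meet).  The     *)
(* underlying lattice is the free bounded distributive lattice on the  *)
(* 2m literals, represented by the up-closed set of clauses whose meet *)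
(* lies below the element (join = union, meet = intersection,          *)
(* 0 = empty, 1 = all clauses); the De Morgan involution swaps i, ~i.  *)
Definition dclause (m : nat) := {set 'I_m * bool}.
Definition subset_rel (m : nat) : rel (dclause m) := fun c c' => c \subset c'.

Definition DM (m : nat) := {S : {set dclause m} | upclosedb (@subset_rel m) S}.

Definition varDM_set m (i : 'I_m) : {set dclause m} := [set c : dclause m | (i, true) \in c].
Lemma varDM_up m (i : 'I_m) : upclosedb (@subset_rel m) (varDM_set i).
Proof.
apply/forallP=> x; apply/forallP=> y; apply/implyP=> /andP[]; rewrite !inE.
by move=> Hx /subsetP; apply.
Qed.
Definition varDM m (i : 'I_m) : DM m := exist (fun S => is_true (upclosedb _ S)) _ (varDM_up i).

(* De Morgan negation:  ~ (\/_d /\_{l in d} l) = /\_d \/_{l in d} ~ l.  *)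
Definition flipc m (c : dclause m) : dclause m := [set l : 'I_m * bool | (l.1, ~~ l.2) \notin c].
Definition negDM_set m (r : DM m) : {set dclause m} := [set c : dclause m | flipc c \notin sval r].
Lemma negDM_up m (r : DM m) : upclosedb (@subset_rel m) (negDM_set r).
Proof.
apply/forallP=> x; apply/forallP=> y; apply/implyP=> /andP[]; rewrite !inE.
move=> Hx Hxy; apply: contra Hx => Hy; apply: (upclosedP (valP r) Hy).
apply/subsetP=> l; rewrite !inE; apply: contra; exact: (subsetP Hxy).
Qed.
Definition negDM m (r : DM m) : DM m := exist (fun S => is_true (upclosedb _ S)) _ (negDM_up r).

(* Morphisms of C (skeleton: objects are the name sets 'I_m).          *)
Definition hom (k m : nat) := {ffun 'I_m -> DM k}.

Definition litDM k m (f : hom k m) (l : 'I_m * bool) : DM k :=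
  if l.2 then f l.1 else negDM (f l.1).

(* Substitution r |-> r[f] : dM(m) -> dM(k) along f : k -> m
   (the restriction maps of the cubical set I). *)
Definition substDM_set k m (f : hom k m) (r : DM m) : {set dclause k} :=
  [set c : dclause k | [exists d in sval r, [forall l in d, c \in sval (litDM f l)]]].
Lemma substDM_up k m (f : hom k m) (r : DM m) :
  upclosedb (@subset_rel k) (substDM_set f r).
Proof.
apply/forallP=> x; apply/forallP=> y; apply/implyP=> /andP[]; rewrite !inE.
move=> /existsP[d /andP[Hd /forallP H]] Hxy; apply/existsP; exists d.
rewrite Hd /=; apply/forallP=> l; apply/implyP=> Hl.
have /implyP/(_ Hl) Hx := H l.
exact: (upclosedP (valP (litDM f l)) Hx Hxy).
Qed.
Definition substDM k m (f : hom k m) (r : DM m) : DM k := exist (fun S => is_true (upclosedb _ S)) _ (substDM_up f r).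

Definition compC k' k m (g : hom k m) (h : hom k' k) : hom k' m :=
  [ffun j => substDM h (g j)].

(* The face lattice F(I): the distributive lattice generated by       *)
(* (i=0), (i=1) subject to (i=0) /\ (i=1) = 0.  A consistent clause is *)
(* a partial assignment 'I_m -> option bool (a face of the cube);      *)
(* an element is the up-closed set of consistent clauses lying below   *)
(* it.  Order = inclusion, meet = intersection, join = union.          *)
Definition face (m : nat) := {ffun 'I_m -> option bool}.
Definition leface m : rel (face m) := fun c c' =>
  [forall i, if c i is Some b then c' i == Some b else true].

Definition FF (m : nat) := {S : {set face m} | upclosedb (@leface m) S}.

Definition leF m (phi psi : FF m) : bool := sval phi \subset sval psi.

(* the face formula (r = 1) in F(k), for r in dM(k) *)
Definition clause_of m (e : face m) : dclause m := [set l : 'I_m * bool | e l.1 == Some l.2].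
Definition faceOf_set k (r : DM k) : {set face k} := [set e : face k | clause_of e \in sval r].
Lemma faceOf_up k (r : DM k) : upclosedb (@leface k) (faceOf_set r).
Proof.
apply/forallP=> x; apply/forallP=> y; apply/implyP=> /andP[]; rewrite !inE.
move=> Hx /forallP Hxy; apply: (upclosedP (valP r) Hx).
apply/subsetP=> l; rewrite !inE => /eqP Hl; have := Hxy l.1; by rewrite Hl.
Qed.
Definition faceOf k (r : DM k) : FF k := exist (fun S => is_true (upclosedb _ S)) _ (faceOf_up r).

(* restriction of F along f : k -> m: (j = 1) |-> (f j = 1),
   (j = 0) |-> (~ f j = 1) *)
Definition restrF_set k m (f : hom k m) (phi : FF m) : {set face k} :=
  [set e : face k | [exists c in sval phi,
     [forall j, if c j is Some b then e \in sval (faceOf (litDM f (j, b))) else true]]].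
Lemma restrF_up k m (f : hom k m) (phi : FF m) :
  upclosedb (@leface k) (restrF_set f phi).
Proof.
apply/forallP=> x; apply/forallP=> y; apply/implyP=> /andP[]; rewrite !inE.
move=> /existsP[c /andP[Hc /forallP H]] Hxy; apply/existsP; exists c.
rewrite Hc /=; apply/forallP=> j; have := H j; case: (c j) => // b Hx.
exact: (upclosedP (valP (faceOf (litDM f (j, b)))) Hx Hxy).
Qed.
Definition restrF k m (f : hom k m) (phi : FF m) : FF k := exist (fun S => is_true (upclosedb _ S)) _ (restrF_up f phi).

(* The exponential F^I at stage m: natural transformations             *)
(* y(m) x I -> F, i.e. families f_k(g, r) in F(k) for g : k -> m and    *)
(* r in I(k) = dM(k), natural in k.                                    *)
Record FI (m : nat) := MkFI {
  fam : forall k, hom k m -> DM k -> FF k;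
  fam_nat : forall k k' (g : hom k m) (h : hom k' k) (r : DM k),
      restrF h (fam g r) = fam (compC g h) (substDM h r)
}.
Arguments fam {m} f {k} g r.

(* Main.v *)
Require Import Defs.
From mathcomp Require Import all_boot.
Set Implicit Arguments. Unset Strict Implicit. Unset Printing Implicit Defensive.

Definition Ch m (w : face m) : dclause m := [set l : 'I_m * bool | w l.1 != Some (~~ l.2)].
Definition evalK k (r : DM k) (w : face k) : option bool :=
  if clause_of w \in sval r then Some true else if Ch w \in sval r then None else Some false.
Definition actF k m (g : hom k m) (w : face k) : face m := [ffun j => evalK (g j) w].
Definition litv m (v : face m) (l : 'I_m * bool) := if l.2 then v l.1 else omap negb (v l.1).

Lemma C1_Ch m (w : face m) : clause_of w \subset Ch w.
Proof. apply/subsetP => -[i b]; rewrite !inE /= => /eqP ->; by case: b. Qed.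

Lemma flipC1 m (w : face m) : flipc (clause_of w) = Ch w.
Proof. by apply/setP=> -[i b]; rewrite !inE. Qed.
Lemma flipCh m (w : face m) : flipc (Ch w) = clause_of w.
Proof. by apply/setP=> -[i b]; rewrite !inE /= negbK negbK. Qed.

Lemma evalK_top k (r : DM k) w : (evalK r w == Some true) = (clause_of w \in sval r).
Proof. by rewrite /evalK; case: ifP => //; case: ifP. Qed.
Lemma evalK_nf k (r : DM k) w : (evalK r w != Some false) = (Ch w \in sval r).
Proof.
rewrite /evalK; case: ifP => H1; first by rewrite (upclosedP (valP r) H1 (C1_Ch w)).
by case: ifP.
Qed.

Lemma evalK_neg k (r : DM k) w : evalK (negDM r) w = omap negb (evalK r w).
Proof.
rewrite /evalK /negDM /= !inE flipC1 flipCh.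
case H1: (clause_of w \in sval r); case H2: (Ch w \in sval r) => //.
by rewrite (upclosedP (valP r) H1 (C1_Ch w)) in H2.
Qed.

Lemma evalK_lit k m (g : hom k m) w l : evalK (litDM g l) w = litv (actF g w) l.
Proof. by case: l => i [] ; rewrite /litDM /litv /actF /= ffunE // evalK_neg. Qed.

Lemma exists_up k (S : {set dclause k}) (HS : upclosedb (@subset_rel k) S)
   (P : pred ('I_k*bool)) (c : dclause k) : (forall l, P l = (l \in c)) ->
   [exists d in S, [forall l in d, P l]] = (c \in S).
Proof.
move=> HP; apply/existsP/idP.
- case=> d /andP[Hd /forallP Hf]; apply: (upclosedP HS Hd); apply/subsetP=> l Hl.
  rewrite -HP; exact: (implyP (Hf l) Hl).
- move=> Hc; exists c; rewrite Hc /=; apply/forallP=> l; apply/implyP; by rewrite HP.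
Qed.

Lemma evalK_subst k m (g : hom k m) r w : evalK (substDM g r) w = evalK r (actF g w).
Proof.
rewrite /evalK /substDM /= !inE.
have E1 : [exists d in sval r, [forall l in d, clause_of w \in sval (litDM g l)]]
   = (clause_of (actF g w) \in sval r).
  apply: (@exists_up _ _ (valP r) (fun l => clause_of w \in sval (litDM g l))) => l; rewrite -evalK_top evalK_lit inE.
  by case: l => i [] ; rewrite /litv /=; case: (actF g w i) => [[]|].
have E2 : [exists d in sval r, [forall l in d, Ch w \in sval (litDM g l)]]
   = (Ch (actF g w) \in sval r).
  apply: (@exists_up _ _ (valP r) (fun l => Ch w \in sval (litDM g l))) => l; rewrite -evalK_nf evalK_lit inE.
  by case: l => i [] ; rewrite /litv /=; case: (actF g w i) => [[]|].
by rewrite E1 E2.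
Qed.

Lemma restrF_mem k m (g : hom k m) phi x :
  (x \in sval (restrF g phi)) = (actF g x \in sval phi).
Proof.
rewrite /restrF /= inE; apply/existsP/idP.
- case=> c /andP[Hc /forallP H]; apply: (upclosedP (valP phi) Hc).
  apply/forallP=> j; have := H j; case: (c j) => // b.
  by rewrite /faceOf /= inE -evalK_top evalK_lit /litv /=; case: b; case: (actF g x j) => [[]|].
- move=> Hy; exists (actF g x); rewrite Hy /=; apply/forallP=> j.
  case E: (actF g x j) => [b|] //.
  rewrite /faceOf /= inE -evalK_top evalK_lit /litv /= E; by case: (b).
Qed.

Lemma evalK_var k (i : 'I_k) w : evalK (varDM i) w = w i.
Proof. by rewrite /evalK /varDM /= !inE /=; case: (w i) => [[]|]. Qed.

Lemma subst_var k m (h : hom k m) j : substDM h (varDM j) = h j.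
Proof.
apply: val_inj; apply/setP=> c; rewrite /substDM /= inE; apply/existsP/idP.
- case=> d /andP[]; rewrite inE => Hd /forallP/(_ (j,true)); by rewrite Hd.
- move=> Hc; exists ([set (j,true)] : dclause m); rewrite !inE eqxx /=.
  apply/forallP=> l; apply/implyP; rewrite inE => /eqP -> /=; exact Hc.
Qed.

Definition iota m : hom m.+1 m := [ffun j => varDM (lift ord_max j)].
Definition ext m (e : face m) : face m.+1 :=
  [ffun j => if unlift ord_max j is Some j' then e j' else None].

Lemma ext_iota m (e : face m) : actF (iota m) (ext e) = e.
Proof. by apply/ffunP=> j; rewrite !ffunE evalK_var ffunE liftK. Qed.

Lemma leface_ext m (e e' : face m) : leface e e' -> leface (ext e) (ext e').
Proof.
move=> H; apply/forallP=> j; rewrite !ffunE.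
case: (unlift ord_max j) => [j'|] //=; exact: (forallP H j').
Qed.

Definition forallF_set m (f : FI m) : {set face m} :=
  [set e | ext e \in sval (fam f (iota m) (varDM ord_max))].
Lemma forallF_up m (f : FI m) : upclosedb (@leface m) (forallF_set f).
Proof.
apply/forallP=> x; apply/forallP=> y; apply/implyP=> /andP[]; rewrite !inE.
move=> Hx Hxy; exact: (upclosedP (valP _) Hx (leface_ext Hxy)).
Qed.
Definition forallF m (f : FI m) : FF m :=
  exist (fun S => is_true (upclosedb _ S)) _ (forallF_up f).

Theorem mainTheorem6 :
  exists forallF : forall m, FI m -> FF m,
    (forall (m m' : nat) (u : hom m' m) (f : FI m) (f' : FI m'),
        (forall k (g : hom k m') (r : DM k),
            fam f' g r = fam f (compC u g) r) ->
        forallF m' f' = restrF u (forallF m f)) /\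
    (forall (m : nat) (phi : FF m) (f : FI m),
        (forall k (g : hom k m) (r : DM k), leF (restrF g phi) (fam f g r))
        <-> leF phi (forallF m f)).
Proof.
exists forallF; split.
- move=> m m' u f f' Hf'; apply: val_inj; apply/setP=> e.
  rewrite restrF_mem /= !inE Hf'.
  pose hn : hom m'.+1 m.+1 := [ffun j => if unlift ord_max j is Some j'
      then substDM (iota m') (u j') else varDM ord_max].
  have E1 : compC (iota m) hn = compC u (iota m').
    by apply/ffunP=> j; rewrite !ffunE subst_var ffunE liftK.
  have E2 : substDM hn (varDM ord_max) = varDM ord_max.
    by rewrite subst_var ffunE unlift_none.
  rewrite -E1 -E2 -(fam_nat f (iota m) hn) restrF_mem.
  suff -> : actF hn (ext e) = ext (actF u e) by []. apply/ffunP=> j; rewrite !ffunE.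
  case: (unlift ord_max j) => [j'|] /=.
  + by rewrite evalK_subst ext_iota ffunE.
  + by rewrite evalK_var ffunE unlift_none.
- move=> m phi f; split.
  + move=> H; apply/subsetP=> e He; rewrite inE.
    have := subsetP (H _ (iota m) (varDM ord_max)) (ext e).
    rewrite restrF_mem ext_iota; exact.
  + move=> H k g r; apply/subsetP=> x; rewrite restrF_mem => Hx.
    have := subsetP H _ Hx; rewrite /forallF /= inE => He.
    pose hk : hom k m.+1 := [ffun j => if unlift ord_max j is Some j' then g j' else r].
    have Eg : compC (iota m) hk = g.
      by apply/ffunP=> j; rewrite !ffunE subst_var ffunE liftK.
    have Er : substDM hk (varDM ord_max) = r by rewrite subst_var ffunE unlift_none.
    have := fam_nat f (iota m) hk (varDM ord_max); rewrite Eg Er => <-.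
    rewrite restrF_mem; apply: (upclosedP (valP _) He).
    apply/forallP=> j; rewrite !ffunE.
    case: (unlift ord_max j) => [j'|] //=; rewrite ffunE.
    by case: (evalK (g j') x).
Qed.
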